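(* Let $(\Delta_1,\dots,\Delta_K)\in(0,1/4]^K$. For any algorithm $\mathbb{A}$ and any time horizon $T\ge K$, there exists an instance $I\in\mathcal{I}_{\Delta_1,\dots,\Delta_K}$ such that \[ \mathcal{R}^{\mathbb{A}}(I;T)\ge \frac14\,\mathscr{P}_{16}(\{\Delta_i\}_{i=1}^K,T). \]
   Context: Thresholding bandit problem: an instance consists of a threshold $\theta\in(0,1)$ and $K$ arms, arm $i$ having a reward distribution supported on $[0,1]$ with mean $\theta_i$. An algorithm sequentially pulls arms for $T$ rounds, each pull of arm $i$ yielding an independent sample of its distribution, and the choice of the arm at each round may depend on past observations (and internal randomness); after $T$ rounds it outputs $d\in\{0,1\}^K$. Arm $i$ is misclassified if $d_i=1$ but $\theta_i<\theta$, or $d_i=0$ but $\theta_i\ge\theta$. The aggregate regret $\mathcal{R}^{\mathbb{A}}(I;T)$ is the expected number of misclassified arms. $\mathcal{I}_{\Delta_1,\dots,\Delta_K}$ is the set of $K$-armed instances with $|\theta_i-\theta|=\Delta_i$ for all $i$. For $c>0$, $\mathscr{P}_c(\{\Delta_i\}_{i=1}^K,T)=\min\{\sum_{i=1}^K\exp(-c x_i\Delta_i^2): x_1+\dots+x_K=T,\ x_i\ge0\}$. *)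

(* Defs.v *)
From mathcomp Require Import all_boot all_order all_algebra.
From mathcomp Require Import all_classical all_reals all_analysis.
Set Implicit Arguments. Unset Strict Implicit. Unset Printing Implicit Defensive.
Import Order.TTheory GRing.Theory Num.Theory.
Local Open Scope classical_set_scope.
Local Open Scope ring_scope.

Section Bandit.
Variable R : realType.

(* Measurable space of reward histories of length t: R^t as the iterated
   product ((unit * R) * R) * ... * R with the product sigma-algebras. *)
Fixpoint Hist (t : nat) : {d : measure_display & measurableType d} :=
  match t with
  | 0 => existT _ _ (unit : measurableType _)
  | t.+1 => existT _ _ ((projT2 (Hist t) * (R : measurableType _))%type
                          : measurableType _)
  end.
Definition rhist (t : nat) : measurableType _ := projT2 (Hist t).

Variable K : nat.

(* After t rounds, the history
   consists of the t arms pulled so far (a t-tuple) and the t observed rewards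
   (an element of rhist t).
   - pol t a h i : probability that the next pull is arm i;
   - dec t a h d : probability of outputting d in {0,1}^K after t rounds. *)
Record algorithm := Algorithm {
  pol : forall t : nat, t.-tuple 'I_K -> rhist t -> 'I_K -> R ;
  dec : forall t : nat, t.-tuple 'I_K -> rhist t -> {ffun 'I_K -> bool} -> R }.
Arguments pol : clear implicits.
Arguments dec : clear implicits.

Definition valid_algorithm (A : algorithm) : Prop :=
  (forall t a h i, 0 <= pol A t a h i) /\
  (forall t a h, \sum_(i < K) pol A t a h i = 1) /\
  (forall t a i, measurable_fun [set: rhist t] (fun h => pol A t a h i)) /\
  (forall t a h d, 0 <= dec A t a h d) /\
  (forall t a h, \sum_(d : {ffun 'I_K -> bool}) dec A t a h d = 1) /\
  (forall t a d, measurable_fun [set: rhist t] (fun h => dec A t a h d)).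

Definition mean (P : probability R R) : R := fine (\int[P]_x (x%:E))%E.

Definition instance_in (Delta : 'I_K -> R) (theta : R)
    (P : 'I_K -> probability R R) : Prop :=
  [/\ 0 < theta < 1,
      (forall i, P i (~` `[0, 1]) = 0%E) &
      (forall i, `|mean (P i) - theta| = Delta i)].

Definition misclassified (theta : R) (P : 'I_K -> probability R R)
    (d : {ffun 'I_K -> bool}) (i : 'I_K) : bool :=
  (d i && (mean (P i) < theta)) || (~~ d i && (theta <= mean (P i))).

Definition nb_misclassified theta P d : R :=
  (#|[set i | misclassified theta P d i]|)%:R.

Section Run.
Variables (A : algorithm) (theta : R) (P : 'I_K -> probability R R).

Definition final_loss (t : nat) (a : t.-tuple 'I_K) (h : rhist t) : \bar R :=
  (\sum_(d : {ffun 'I_K -> bool}) (dec A t a h d)%:E * (nb_misclassified theta P d)%:E)%E.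

(* expected final loss when n more rounds are played from history (a, h) *)
Fixpoint run (n : nat) : forall t : nat, t.-tuple 'I_K -> rhist t -> \bar R :=
  match n with
  | 0 => fun t a h => @final_loss t a h
  | n.+1 => fun t a h =>
      (\sum_(i < K) (pol A t a h i)%:E *
          \int[P i]_y @run n t.+1 (rcons_tuple a i) ((h, y) : rhist t.+1))%E
  end.
End Run.
Arguments run : clear implicits.

Definition regret (A : algorithm) (theta : R) (P : 'I_K -> probability R R)
    (T : nat) : \bar R :=
  run A theta P T 0 [tuple] tt.

Definition scrP (c : R) (Delta : 'I_K -> R) (T : nat) : R :=
  inf [set \sum_(i < K) expR (- (c * x i * Delta i ^+ 2)) |
        x in [set x : 'I_K -> R | (forall i, 0 <= x i) /\ \sum_(i < K) x i = T%:R]].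

End Bandit.

(* Main.v *)
From HB Require Import structures.
Require Import Defs.
From mathcomp Require Import all_boot all_order all_algebra.
From mathcomp Require Import all_classical all_reals all_analysis.
From mathcomp Require Import measurable_realfun.
From mathcomp Require Import ring lra.
Import Order.TTheory GRing.Theory Num.Theory.
Local Open Scope ring_scope.
Lemma jensen_exp (R : realType) (I : finType) (w z : I -> R) :
  (forall i, 0 <= w i) -> \sum_i w i = 1 ->
  expR (\sum_i w i * z i) <= \sum_i w i * expR (z i).
Proof.
move=> w0 w1; set m := \sum_i w i * z i.
have -> : \sum_i w i * expR (z i) = \sum_i expR m * (w i * expR (z i - m)).
  apply: eq_bigr => i _; rewrite expRB; field.
  by rewrite gt_eqF ?expR_gt0.
rewrite -mulr_sumr; rewrite -[X in X <= _]mulr1; rewrite ler_pM2l ?expR_gt0 //.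
apply: (@le_trans _ _ (\sum_i w i * (1 + (z i - m)))).
  rewrite (eq_bigr (fun i => w i + (w i * z i - m * w i))); last first.
    by move=> i _; ring.
  by rewrite big_split /= w1 sumrB -mulr_sumr w1 mulr1 subrr addr0.
by apply: ler_sum => i _; rewrite ler_wpM2l // expR_ge1Dx.
Qed.

Lemma jensen2 (R : realType) (r x y : R) : 0 <= r <= 1 ->
  expR (r * x + (1 - r) * y) <= r * expR x + (1 - r) * expR y.
Proof.
move=> /andP[r0 r1].
have := @jensen_exp R bool (fun b => if b then r else 1 - r) (fun b => if b then x else y).
rewrite !big_bool /=. apply.
  by case => //; rewrite subr_ge0.
by rewrite addrC subrK.
Qed.


Section Discrete.
Variables (R : realType) (K : nat) (A : algorithm R K).

Definition Leaf := forall t : nat, t.-tuple 'I_K -> rhist R t -> R.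

Fixpoint G (c w1 w0 : 'I_K -> R) (L : Leaf) (n : nat) : Leaf :=
  match n with
  | 0 => L
  | n.+1 => fun t a h => \sum_(j < K) pol A a h j *
      (c j + w1 j * G c w1 w0 L n t.+1 (rcons_tuple a j) ((h, 1) : rhist R t.+1)
           + w0 j * G c w1 w0 L n t.+1 (rcons_tuple a j) ((h, 0) : rhist R t.+1))
  end.

Lemma G_sum (I : finType) (c : I -> 'I_K -> R) w1 w0 (L : I -> Leaf) n t a h :
  G (fun j => \sum_(k : I) c k j) w1 w0 (fun t a h => \sum_(k : I) L k t a h) n t a h
  = \sum_(k : I) G (c k) w1 w0 (L k) n t a h.
Proof.
elim: n t a h => [//|n IH] t a h /=.
rewrite exchange_big /=; apply: eq_bigr => j _.
rewrite !IH -mulr_sumr; congr (_ * _).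
by rewrite !big_split /= -!mulr_sumr.
Qed.


Hypothesis pol_ge0 : forall t (a : t.-tuple 'I_K) h j, 0 <= pol A a h j.
Hypothesis pol_sum1 : forall t (a : t.-tuple 'I_K) h, \sum_(j < K) pol A a h j = 1.

Lemma G_ge0 c w1 w0 (L : Leaf) n t a h :
  (forall j, 0 <= c j) -> (forall j, 0 <= w1 j) -> (forall j, 0 <= w0 j) ->
  (forall t a h, 0 <= L t a h) -> 0 <= G c w1 w0 L n t a h.
Proof.
move=> c0 w10 w00 L0; elim: n t a h => [|n IH] t a h /=; first exact: L0.
apply: sumr_ge0 => j _; apply: mulr_ge0 => //.
by rewrite !addr_ge0 // mulr_ge0.
Qed.

Lemma G_const c0 w1 w0 l0 n t a h :
  (forall j, w1 j + w0 j = 1) ->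
  G (fun _ => c0) w1 w0 (fun _ _ _ => l0) n t a h = n%:R * c0 + l0.
Proof.
move=> hw; elim: n t a h => [|n IH] t a h /=; first by rewrite mul0r add0r.
under eq_bigr => j _ do rewrite !IH -addrA -mulrDl hw mul1r.
rewrite -big_distrl /= pol_sum1 mul1r mulrSr; ring.
Qed.

Lemma G_scale k c w1 w0 (L : Leaf) n t a h :
  G (fun j => k * c j) w1 w0 (fun t a h => k * L t a h) n t a h
  = k * G c w1 w0 L n t a h.
Proof.
elim: n t a h => [//|n IH] t a h /=.
rewrite mulr_sumr; apply: eq_bigr => j _; rewrite !IH; ring.
Qed.

Lemma G_le c w1 w0 (L1 L2 : Leaf) n t a h :
  (forall j, 0 <= w1 j) -> (forall j, 0 <= w0 j) ->
  (forall t a h, L1 t a h <= L2 t a h) ->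
  G c w1 w0 L1 n t a h <= G c w1 w0 L2 n t a h.
Proof.
move=> w10 w00 hL; elim: n t a h => [|n IH] t a h /=; first exact: hL.
apply: ler_sum => j _; apply: ler_wpM2l => //.
by rewrite lerD // ?lerD2l // ler_wpM2l.
Qed.

Lemma BC_lb c r w1 w0 n t a h :
  (forall j, 0 < r j < 1) -> (forall j, 0 < w1 j) -> (forall j, 0 < w0 j) ->
  (forall j, - c j <= r j * ln (w1 j / r j) + (1 - r j) * ln (w0 j / (1 - r j))) ->
  expR (- G c r (fun j => 1 - r j) (fun _ _ _ => 0) n t a h)
    <= G (fun _ => 0) w1 w0 (fun _ _ _ => 1) n t a h.
Proof.
move=> hr hw1 hw0 hc; elim: n t a h => [|n IH] t a h /=.
  by rewrite oppr0 expR0.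
set N1 := fun j => G c r (fun j => 1 - r j) (fun _ _ _ => 0) n t.+1 (rcons_tuple a j) ((h, 1) : rhist R t.+1).
set N0 := fun j => G c r (fun j => 1 - r j) (fun _ _ _ => 0) n t.+1 (rcons_tuple a j) ((h, 0) : rhist R t.+1).
apply: (@le_trans _ _ (\sum_(j < K) pol A a h j *
   expR (- (c j + r j * N1 j + (1 - r j) * N0 j)))).
  rewrite -sumrN.
  under eq_bigr => j _ do rewrite -mulrN.
  apply: jensen_exp => //.
apply: ler_sum => j _; apply: ler_wpM2l => //; rewrite add0r.
have [r0 r1] := andP (hr j).
have r1' : 0 < 1 - r j by rewrite subr_gt0.
apply: (@le_trans _ _ (w1 j * expR (- N1 j) + w0 j * expR (- N0 j))); last first.
  by apply: lerD; apply: ler_wpM2l (IH _ _ _); exact: ltW.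
have e1 : w1 j = r j * expR (ln (w1 j / r j)).
  by rewrite lnK ?posrE ?divr_gt0 // mulrC divfK // gt_eqF.
have e0 : w0 j = (1 - r j) * expR (ln (w0 j / (1 - r j))).
  by rewrite lnK ?posrE ?divr_gt0 // mulrC divfK // gt_eqF.
rewrite [in X in _ <= X]e1 [in X in _ <= X]e0 -!mulrA -!expRD.
apply: le_trans; last first.
  by apply: jensen2; rewrite !ltW.
rewrite ler_expR.
have := hc j; lra.
Qed.


Lemma alg_w (w r q l m X X' Y Y' : R) : 0 < w -> 0 < r -> 0 < q -> 0 < l -> 0 < m ->
  w ^+ 2 = r * q ->
  w * (l * r / w * X + X' / (l * r / w) + m * q / w * Y + Y' / (m * q / w))
  = l * r * X + q * X' / l + m * q * Y + r * Y' / m.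
Proof.
move=> w0 r0 q0 l0 m0 hw.
have hq : q = w ^+ 2 / r by rewrite hw; field; rewrite gt_eqF.
rewrite hq; field.
by rewrite !gt_eqF.
Qed.

Lemma alg_base (u l : R) : 0 <= u -> 0 < l -> 2 * u <= l * u + u / l.
Proof.
move=> u0 l0; rewrite -subr_ge0.
have -> : l * u + u / l - 2 * u = u * (l - 1) ^+ 2 / l.
  by field; rewrite gt_eqF.
by apply: divr_ge0; [apply: mulr_ge0 => //; exact: sqr_ge0 | exact: ltW].
Qed.

Lemma BC_ub r q w1 w0 (u v : Leaf) n t a h :
  (forall j, 0 < r j < 1) -> (forall j, 0 < q j < 1) ->
  (forall j, 0 < w1 j) -> (forall j, 0 < w0 j) ->
  (forall j, w1 j ^+ 2 = r j * q j) ->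
  (forall j, w0 j ^+ 2 = (1 - r j) * (1 - q j)) ->
  (forall t a h, 0 <= u t a h) -> (forall t a h, 0 <= v t a h) ->
  (forall t a h, u t a h + v t a h = 1) ->
  forall l m, 0 < l -> 0 < m ->
  2 * G (fun _ => 0) w1 w0 (fun _ _ _ => 1) n t a h <=
    l * G (fun _ => 0) r (fun j => 1 - r j) u n t a h
    + G (fun _ => 0) q (fun j => 1 - q j) u n t a h / l
    + m * G (fun _ => 0) q (fun j => 1 - q j) v n t a h
    + G (fun _ => 0) r (fun j => 1 - r j) v n t a h / m.
Proof.
move=> hr hq hw1 hw0 hw1s hw0s u0 v0 uv.
elim: n t a h => [|n IH] t a h l m l0 m0 /=.
  have := uv t a h.
  have := @alg_base (u t a h) l (u0 t a h) l0; have := @alg_base (v t a h) m (v0 t a h) m0; lra.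
set F := fun (j : 'I_K) => 
   l * (0 + r j * G (fun _ => 0) r (fun j => 1 - r j) u n t.+1 (rcons_tuple a j) ((h, 1) : rhist R t.+1)
            + (1 - r j) * G (fun _ => 0) r (fun j => 1 - r j) u n t.+1 (rcons_tuple a j) ((h, 0) : rhist R t.+1))
   + (0 + q j * G (fun _ => 0) q (fun j => 1 - q j) u n t.+1 (rcons_tuple a j) ((h, 1) : rhist R t.+1)
            + (1 - q j) * G (fun _ => 0) q (fun j => 1 - q j) u n t.+1 (rcons_tuple a j) ((h, 0) : rhist R t.+1)) / l
   + m * (0 + q j * G (fun _ => 0) q (fun j => 1 - q j) v n t.+1 (rcons_tuple a j) ((h, 1) : rhist R t.+1)
            + (1 - q j) * G (fun _ => 0) q (fun j => 1 - q j) v n t.+1 (rcons_tuple a j) ((h, 0) : rhist R t.+1))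
   + (0 + r j * G (fun _ => 0) r (fun j => 1 - r j) v n t.+1 (rcons_tuple a j) ((h, 1) : rhist R t.+1)
            + (1 - r j) * G (fun _ => 0) r (fun j => 1 - r j) v n t.+1 (rcons_tuple a j) ((h, 0) : rhist R t.+1)) / m.
apply: (@le_trans _ _ (\sum_(j < K) pol A a h j * F j)); last first.
  rewrite /F le_eqVlt; apply/orP; left; apply/eqP.
  rewrite !mulr_sumr !mulr_suml -!big_split /=; apply: eq_bigr => j _; ring.
rewrite mulr_sumr; apply: ler_sum => j _.
rewrite mulrCA; apply: ler_wpM2l => //.
rewrite /F !add0r.
have [r0 r1] := andP (hr j); have [q0 q1] := andP (hq j).
have r1' : 0 < 1 - r j by rewrite subr_gt0.
have q1' : 0 < 1 - q j by rewrite subr_gt0.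
have H1 := IH t.+1 (rcons_tuple a j) ((h, 1) : rhist R t.+1) (l * r j / w1 j) (m * q j / w1 j)
   (divr_gt0 (mulr_gt0 l0 r0) (hw1 j)) (divr_gt0 (mulr_gt0 m0 q0) (hw1 j)).
have H0 := IH t.+1 (rcons_tuple a j) ((h, 0) : rhist R t.+1) (l * (1 - r j) / w0 j) (m * (1 - q j) / w0 j)
   (divr_gt0 (mulr_gt0 l0 r1') (hw0 j)) (divr_gt0 (mulr_gt0 m0 q1') (hw0 j)).
have {}H1 := ler_wpM2l (ltW (hw1 j)) H1.
have {}H0 := ler_wpM2l (ltW (hw0 j)) H0.
rewrite alg_w // in H1; rewrite alg_w // in H0.
lra.
Qed.


Lemma G_ext c w1 w0 (L1 L2 : Leaf) n t a h :
  (forall t a h, L1 t a h = L2 t a h) ->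
  G c w1 w0 L1 n t a h = G c w1 w0 L2 n t a h.
Proof.
move=> hL; elim: n t a h => [|n IH] t a h /=; first exact: hL.
by apply: eq_bigr => j _; rewrite !IH.
Qed.

Lemma G_add w1 w0 (L1 L2 : Leaf) n t a h :
  G (fun _ => 0) w1 w0 (fun t a h => L1 t a h + L2 t a h) n t a h
  = G (fun _ => 0) w1 w0 L1 n t a h + G (fun _ => 0) w1 w0 L2 n t a h.
Proof.
elim: n t a h => [//|n IH] t a h /=.
rewrite -big_split /=; apply: eq_bigr => j _; rewrite !IH; ring.
Qed.

Lemma G_le1 r (u v : Leaf) n t a h :
  (forall j, 0 <= r j <= 1) ->
  (forall t a h, 0 <= v t a h) ->
  (forall t a h, u t a h + v t a h = 1) ->
  G (fun _ => 0) r (fun j => 1 - r j) u n t a h <= 1.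
Proof.
move=> hr v0 uv.
have e : G (fun _ => 0) r (fun j => 1 - r j) u n t a h
       + G (fun _ => 0) r (fun j => 1 - r j) v n t a h = 1.
  rewrite -G_add (@G_ext _ _ _ _ (fun _ _ _ => 1)) //.
  by rewrite G_const ?mulr0 ?add0r // => j; rewrite addrC subrK.
have : 0 <= G (fun _ => 0) r (fun j => 1 - r j) v n t a h.
  apply: G_ge0 => // j; first by case/andP: (hr j).
  by case/andP: (hr j) => _; rewrite subr_ge0.
lra.
Qed.

Lemma pair_bound c r q w1 w0 (u v : Leaf) n t a h :
  (forall j, 0 < r j < 1) -> (forall j, 0 < q j < 1) ->
  (forall j, 0 < w1 j) -> (forall j, 0 < w0 j) ->
  (forall j, w1 j ^+ 2 = r j * q j) ->
  (forall j, w0 j ^+ 2 = (1 - r j) * (1 - q j)) ->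
  (forall j, - c j <= r j * ln (w1 j / r j) + (1 - r j) * ln (w0 j / (1 - r j))) ->
  (forall j, - c j <= q j * ln (w1 j / q j) + (1 - q j) * ln (w0 j / (1 - q j))) ->
  (forall t a h, 0 <= u t a h) -> (forall t a h, 0 <= v t a h) ->
  (forall t a h, u t a h + v t a h = 1) ->
  expR (- (G c r (fun j => 1 - r j) (fun _ _ _ => 0) n t a h
           + G c q (fun j => 1 - q j) (fun _ _ _ => 0) n t a h)) / 2
  <= G (fun _ => 0) r (fun j => 1 - r j) u n t a h
     + G (fun _ => 0) q (fun j => 1 - q j) v n t a h.
Proof.
move=> hr hq hw1 hw0 hw1s hw0s hcr hcq u0 v0 uv.
set BC := G (fun _ => 0) w1 w0 (fun _ _ _ => 1) n t a h.
set Nr := G c r _ _ n t a h; set Nq := G c q _ _ n t a h.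
set Ru := G _ r _ u n t a h; set Qv := G _ q _ v n t a h.
pose Rv := G (fun _ => 0) r (fun j => 1 - r j) v n t a h.
pose Qu := G (fun _ => 0) q (fun j => 1 - q j) u n t a h.
have b1 : expR (- Nr) <= BC by apply: BC_lb.
have b2 : expR (- Nq) <= BC by apply: BC_lb.
have BC0 : 0 < BC by apply: lt_le_trans b1; rewrite expR_gt0.
have l0 : 0 < 2 / BC by rewrite divr_gt0.
have H := @BC_ub r q w1 w0 u v n t a h hr hq hw1 hw0 hw1s hw0s u0 v0 uv _ _ l0 l0.
rewrite -/BC -/Ru -/Rv -/Qu -/Qv invf_div in H.
have hr' : forall j, 0 <= r j <= 1 by move=> j; case/andP: (hr j) => *; rewrite !ltW.
have hq' : forall j, 0 <= q j <= 1 by move=> j; case/andP: (hq j) => *; rewrite !ltW.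
have Qu1 : Qu <= 1 by rewrite /Qu; apply: (@G_le1 q u v).
have Rv1 : Rv <= 1.
  by rewrite /Rv; apply: (@G_le1 r v u) => // t' a' h'; rewrite addrC.
have E1 : Qu * (BC / 2) <= BC / 2 by apply: ler_piMl => //; rewrite divr_ge0 ?ltW.
have E2 : Rv * (BC / 2) <= BC / 2 by apply: ler_piMl => //; rewrite divr_ge0 ?ltW.
have E3 : BC <= 2 * (Ru + Qv) / BC.
  have : 2 / BC * Ru + 2 / BC * Qv = 2 * (Ru + Qv) / BC by field; rewrite gt_eqF.
  rewrite !mulrA in H E1 E2 *. lra.
have E4 : BC * BC <= 2 * (Ru + Qv).
  by rewrite -ler_pdivlMr // mulrC.
have E5 : expR (- Nr) * expR (- Nq) <= BC * BC.
  by apply: ler_pM => //; rewrite ltW ?expR_gt0.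
rewrite opprD expRD ler_pdivrMr //; lra.
Qed.

End Discrete.

Arguments G {R K}.

Lemma ln_diff_ub (R : realType) (a b : R) : 1/4 <= b -> b <= a ->
  ln a - ln b <= 4 * (a - b).
Proof.
move=> b4 ba.
have b0 : 0 < b by apply: lt_le_trans b4; lra.
have a0 : 0 < a by apply: lt_le_trans ba.
rewrite -ln_div ?posrE //.
have -> : a / b = 1 + (a - b) / b by field; rewrite gt_eqF.
have H0 : 0 <= (a - b) / b by apply: divr_ge0; rewrite ?subr_ge0 // ltW.
apply: le_trans (le_ln1Dx _) _; first lra.
rewrite ler_pdivrMr //.
have : 0 <= a - b by rewrite subr_ge0.
move=> h; have : (a - b) * (1/4) <= (a - b) * b by rewrite ler_wpM2l.
lra.
Qed.

Lemma ln_cross (R : realType) (a b : R) : 1/4 <= a -> 1/4 <= b ->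
  (a - b) * (ln a - ln b) <= 4 * (a - b) ^+ 2.
Proof.
move=> a4 b4; case: (leP b a) => ba.
  have := @ln_diff_ub _ a b b4 ba; move=> H.
  have : (a - b) * (ln a - ln b) <= (a - b) * (4 * (a - b)).
    by rewrite ler_wpM2l // subr_ge0.
  by rewrite expr2; lra.
have := @ln_diff_ub _ b a a4 (ltW ba); move=> H.
have : (b - a) * (ln b - ln a) <= (b - a) * (4 * (b - a)).
  by rewrite ler_wpM2l // subr_ge0 ltW.
by rewrite expr2; lra.
Qed.

Lemma kl_bound (R : realType) (x y : R) : x + y = 1 -> 1/4 <= x -> 1/4 <= y ->
  - (2 * (x - y) ^+ 2) <=
  x * ln (Num.sqrt (x * y) / x) + y * ln (Num.sqrt (x * y) / y).
Proof.
move=> xy x4 y4.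
have x0 : 0 < x by apply: lt_le_trans x4; lra.
have y0 : 0 < y by apply: lt_le_trans y4; lra.
have s0 : 0 < Num.sqrt (x * y) by rewrite sqrtr_gt0 mulr_gt0.
have hs : ln (Num.sqrt (x * y)) = (ln x + ln y) / 2.
  have : ln (Num.sqrt (x * y) ^+ 2) = ln (Num.sqrt (x * y)) *+ 2 by rewrite lnXn.
  rewrite sqr_sqrtr ?mulr_ge0 ?ltW // lnM ?posrE // => ->.
  by rewrite mulr2n; field.
rewrite !ln_div ?posrE // hs.
have := @ln_cross _ x y x4 y4.
lra.
Qed.

Local Open Scope classical_set_scope.

Section Bern.
Variable R : realType.
Definition gb (b : bool) : R := if b then 1 else 0.
Lemma measurable_gb : measurable_fun [set: bool] gb.
Proof. by move=> _ Y _; rewrite setTI. Qed.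
HB.instance Definition _ := isMeasurableFun.Build _ _ bool R gb measurable_gb.

Definition Bp (p : R) : probability R R := distribution (bernoulli_prob p) gb.

Lemma integral_Bp (p : R) (f : R -> \bar R) : 0 <= p <= 1 ->
  measurable_fun setT f -> (forall x, (0 <= f x)%E) ->
  (\int[Bp p]_y f y)%E = (p%:E * f 1%R + (1 - p)%:E * f 0%R)%E.
Proof.
move=> p01 mf f0.
rewrite /Bp ge0_integral_distribution // integral_bernoulli_prob //.
by move=> x; exact: f0.
Qed.

Lemma Bp_out (p : R) : Bp p (~` `[0%R, 1%R]) = 0%E.
Proof.
rewrite /Bp /distribution /pushforward /=.
have -> : gb @^-1` (~` `[0%R, 1%R]) = set0.
  apply/seteqP; split => // b /=; rewrite /gb in_itv /=.
  by case: b => /=; rewrite ?lexx ?ler01.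
exact: measure0.
Qed.

Lemma mean_Bp (p : R) : 0 <= p <= 1 -> mean (Bp p) = p.
Proof.
move=> p01; rewrite /mean /Bp integral_distribution //.
- rewrite integral_bernoulli_prob //=; last by case => /=; rewrite lee_fin ?ler01.
  by rewrite /gb /= mulr1 mulr0 addr0.
- apply/integrableP; split; first by apply/measurable_EFinP.
  rewrite integral_bernoulli_prob //=; try by move=> b; exact: abse_ge0.
  by rewrite /gb /= -!EFinM -EFinD ltry.
Qed.
End Bern.
Arguments Bp {R}.
Arguments integral_Bp {R}.
Arguments mean_Bp {R}.
Arguments Bp_out {R}.

Section Conn.
Variables (R : realType) (K : nat) (A : algorithm R K).
Hypothesis hA : valid_algorithm A.
Variables (theta : R) (r : 'I_K -> R).
Hypothesis hr : forall j, 0 <= r j <= 1.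
Let P := fun j => Bp (r j).

Definition LossL : Leaf R K := fun t a h =>
  \sum_(d : {ffun 'I_K -> bool}) dec A a h d * nb_misclassified theta P d.

Lemma LossL_ge0 t a h : 0 <= LossL t a h.
Proof.
case: hA => _ [_ [_ [hd _]]].
by apply: sumr_ge0 => d _; rewrite mulr_ge0 // ler0n.
Qed.

Lemma run_G n : forall t a,
  (forall h, run A theta P n a h = (G A (fun _ => 0) r (fun j => 1 - r j) LossL n t a h)%:E)
  /\ measurable_fun setT (G A (fun _ => 0) r (fun j => 1 - r j) LossL n t a).
Proof.
case: hA => hp0 [hp1 [hpm [hd0 [hd1 hdm]]]].
elim: n => [|n IH] t a.
  split.
    move=> h /=; rewrite /final_loss /LossL.
    by rewrite -sumEFin; apply: eq_bigr => d _; rewrite EFinM.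
  rewrite /LossL /=; apply: measurable_sum => d.
  by apply: measurable_funM => //; exact: measurable_cst.
split.
  move=> h /=; rewrite -sumEFin; apply: eq_bigr => j _.
  have [IHe IHm] := IH t.+1 (rcons_tuple a j).
  rewrite (eq_integral (fun y => (G A (fun _ => 0) r (fun j => 1 - r j) LossL n t.+1 (rcons_tuple a j) ((h, y) : rhist R t.+1))%:E)); last first.
    by move=> y _; rewrite IHe.
  rewrite integral_Bp //.
  - by rewrite add0r -!EFinM.
  - apply/measurable_EFinP; apply: measurableT_comp IHm _.
    exact: pair1_measurable.
  - move=> y; rewrite lee_fin; apply: (@G_ge0 R K A hp0) => // k.
    + by case/andP: (hr k).
    + by case/andP: (hr k) => _; rewrite subr_ge0.
    + exact: LossL_ge0.
rewrite /=; apply: measurable_sum => j; apply: measurable_funM; first exact: hpm.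
have [_ IHm] := IH t.+1 (rcons_tuple a j).
apply: measurable_funD; first apply: measurable_funD.
- exact: measurable_cst.
- apply: measurable_funM; first exact: measurable_cst.
  apply: measurableT_comp IHm _; exact: pair2_measurable.
- apply: measurable_funM; first exact: measurable_cst.
  apply: measurableT_comp IHm _; exact: pair2_measurable.
Qed.
End Conn.

Section Final.
Variables (R : realType) (K : nat) (Delta : 'I_K -> R).
Hypothesis hD : forall i, 0 < Delta i <= 1/4.
Variable A : algorithm R K.
Hypothesis hA : valid_algorithm A.
Variable T : nat.

Notation S := {ffun 'I_K -> bool}.

Definition rs (s : S) j : R := if s j then 1/2 + Delta j else 1/2 - Delta j.
Definition flip (i : 'I_K) (s : S) : S :=
  [ffun j => if j == i then ~~ s j else s j].

Lemma flipK i : involutive (flip i).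
Proof.
move=> s; apply/ffunP => j; rewrite !ffunE.
by case: eqP => // ->; rewrite negbK.
Qed.

Lemma flip_i i s : flip i s i = ~~ s i.
Proof. by rewrite ffunE eqxx. Qed.

Lemma flip_j i s j : j != i -> flip i s j = s j.
Proof. by rewrite ffunE => /negbTE ->. Qed.

Lemma rs_bounds s j : 1/4 <= rs s j <= 3/4.
Proof.
have [d0 d1] := andP (hD j); rewrite /rs; case: (s j); apply/andP; split; lra.
Qed.

Lemma rs01 s j : 0 < rs s j < 1.
Proof. have /andP[h1 h2] := rs_bounds s j; apply/andP; split; lra. Qed.

Lemma rs_flip_i s i : rs (flip i s) i = 1 - rs s i.
Proof. by rewrite /rs flip_i; case: (s i) => /=; lra. Qed.

Lemma rs_flip_j s i j : j != i -> rs (flip i s) j = rs s j.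
Proof. by move=> ji; rewrite /rs flip_j. Qed.


Definition Eb (i : 'I_K) (b : bool) : Leaf R K :=
  fun t a h => \sum_(d : S) dec A a h d * (d i != b)%:R.
Definition V s (L : Leaf R K) :=
  G A (fun _ => 0) (rs s) (fun j => 1 - rs s j) L T 0 [tuple] tt.
Definition M s i :=
  G A (fun j => (j == i)%:R) (rs s) (fun j => 1 - rs s j) (fun _ _ _ => 0) T 0 [tuple] tt.

Lemma Eb_ge0 i b t a h : 0 <= Eb i b t a h.
Proof.
case: hA => _ [_ [_ [hd _]]].
by apply: sumr_ge0 => d _; rewrite mulr_ge0 // ler0n.
Qed.

Lemma Eb_sum i b t a h : Eb i b t a h + Eb i (~~ b) t a h = 1.
Proof.
case: hA => _ [_ [_ [_ [hd1 _]]]].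
rewrite /Eb -big_split /=; rewrite -[RHS](hd1 t a h); apply: eq_bigr => d _.
by case: (d i); case: b => /=; rewrite ?mulr0 ?mulr1 ?addr0 ?add0r.
Qed.

Lemma hc_cond (r q : 'I_K -> R) i k j :
  (forall j, 0 < r j < 1) ->
  (j == i -> [/\ q j = 1 - r j, 1/4 <= r j, 1/4 <= q j & k = 8 * Delta i ^+ 2]) ->
  (j != i -> q j = r j) ->
  (r j - q j) ^+ 2 = 4 * Delta i ^+ 2 \/ j != i ->
  - (k * (j == i)%:R) <= r j * ln (Num.sqrt (r j * q j) / r j)
     + (1 - r j) * ln (Num.sqrt ((1 - r j) * (1 - q j)) / (1 - r j)).
Proof.
move=> hr hi hj hd.
have [r0 r1] := andP (hr j).
case: (eqVneq j i) => [ji|ji].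
  subst j.
  have [qe r4 q4 ->] := hi (eqxx i).
  rewrite /= mulr1.
  have e1 : 1 - r i = q i by rewrite qe; lra.
  have e2 : 1 - q i = r i by rewrite qe; lra.
  rewrite e1 e2 [q i * r i]mulrC.
  case: hd => [hd|]; last by rewrite eqxx.
  have H := @kl_bound R (r i) (q i).
  rewrite hd in H; apply: le_trans (H _ _ _) => //; lra.
have r1' : 0 < 1 - r j by rewrite subr_gt0.
rewrite /= mulr0 oppr0 (hj ji) -!expr2 !sqrtr_sqr.
rewrite (ger0_norm (ltW r0)) (ger0_norm (ltW r1')) !divff ?gt_eqF //.
by rewrite ln1 !mulr0 addr0.
Qed.


Lemma N_scale s i k :
  G A (fun j => k * (j == i)%:R) (rs s) (fun j => 1 - rs s j) (fun _ _ _ => 0) T 0 [tuple] tt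
  = k * M s i.
Proof.
rewrite /M -G_scale; apply: G_ext => t a h; by rewrite mulr0.
Qed.

Lemma pair_s s i :
  expR (- (8 * Delta i ^+ 2 * (M s i + M (flip i s) i))) / 2
  <= V s (Eb i (s i)) + V (flip i s) (Eb i (~~ s i)).
Proof.
case: hA => hp0 [hp1 _].
set q := flip i s.
have hr := rs01 s; have hq := rs01 q.
have H := @pair_bound R K A hp0 hp1 (fun j => 8 * Delta i ^+ 2 * (j == i)%:R)
  (rs s) (rs q) (fun j => Num.sqrt (rs s j * rs q j))
  (fun j => Num.sqrt ((1 - rs s j) * (1 - rs q j))) (Eb i (s i)) (Eb i (~~ s i))
  T 0 [tuple] tt hr hq.
rewrite /V /q mulrDr -!N_scale.
apply: H.
- by move=> j; rewrite sqrtr_gt0 mulr_gt0 //; [case/andP: (hr j)|case/andP: (hq j)].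
- move=> j; rewrite sqrtr_gt0 mulr_gt0 // subr_gt0; 
    [by case/andP: (hr j)|by case/andP: (hq j)].
- move=> j; rewrite sqr_sqrtr // mulr_ge0 // ltW //; 
    [by case/andP: (hr j)|by case/andP: (hq j)].
- move=> j; rewrite sqr_sqrtr // mulr_ge0 // ltW // subr_gt0;
    [by case/andP: (hr j)|by case/andP: (hq j)].
- move=> j; apply: hc_cond => //.
  + move=> /eqP ->; split => //.
    * by rewrite /q rs_flip_i.
    * by case/andP: (rs_bounds s i).
    * by case/andP: (rs_bounds q i).
  + by move=> ji; rewrite /q rs_flip_j.
  + case: (eqVneq j i) => [->|]; last by right.
    left; rewrite /q rs_flip_i /rs; case: (s i) => /=; lra.
- move=> j; rewrite [rs s j * _]mulrC [(1 - rs s j) * _]mulrC.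
  apply: hc_cond => //.
  + move=> /eqP ->; split => //.
    * by rewrite /q rs_flip_i; lra.
    * by case/andP: (rs_bounds q i).
    * by case/andP: (rs_bounds s i).
  + by move=> ji; rewrite /q rs_flip_j.
  + case: (eqVneq j i) => [->|]; last by right.
    left; rewrite /q rs_flip_i /rs; case: (s i) => /=; lra.
- exact: Eb_ge0.
- exact: Eb_ge0.
- exact: Eb_sum.
Qed.


Lemma rs01' s : forall j, 0 <= rs s j <= 1.
Proof. by move=> j; case/andP: (rs01 s j) => h1 h2; rewrite !ltW. Qed.

Lemma nb_s s d :
  nb_misclassified (1/2) (fun j => Bp (rs s j)) d = \sum_i (d i != s i)%:R.
Proof.
have hm : forall i, misclassified (1/2) (fun j => Bp (rs s j)) d i = (d i != s i).
  move=> i; rewrite /misclassified mean_Bp ?rs01' //.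
  have [d0 d1] := andP (hD i).
  rewrite /rs; case: (s i); case: (d i) => /=.
  - by rewrite orbF; apply/negbTE/negP => H; lra.
  - by apply/idP; lra.
  - by rewrite orbF; apply/idP; lra.
  - by apply/negbTE/negP => H; lra.
rewrite /nb_misclassified.
rewrite (@eq_card _ _ [pred i | d i != s i]); last first.
  move=> i; rewrite inE /=; apply/idP/idP => [/set_mem /= H|H].
    by rewrite -hm.
  by apply/mem_set => /=; rewrite hm.
rewrite -sum1_card natr_sum big_mkcond /=.
by apply: eq_bigr => i _; rewrite inE /=; case: (d i != s i).
Qed.

Lemma G_sum0 w1 w0 (L : 'I_K -> Leaf R K) n t a h :
  G A (fun _ => 0) w1 w0 (fun t a h => \sum_k L k t a h) n t a h
  = \sum_k G A (fun _ => 0) w1 w0 (L k) n t a h.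
Proof.
rewrite -G_sum.
have -> : (fun _ : 'I_K => (0 : R)) = (fun j => \sum_(k < K) (fun _ : 'I_K => (0:R)) j).
  by apply/funext => j; rewrite big1.
by [].
Qed.

Lemma reg_s s :
  regret A (1/2) (fun j => Bp (rs s j)) T = (\sum_i V s (Eb i (s i)))%:E.
Proof.
rewrite /regret; have [e _] := @run_G R K A hA (1/2) (rs s) (rs01' s) T 0 [tuple].
rewrite e; congr EFin.
rewrite /V -G_sum0; apply: G_ext => t a h.
rewrite /LossL /Eb exchange_big /=; apply: eq_bigr => d _.
by rewrite nb_s mulr_sumr.
Qed.

Lemma sumM s : \sum_i M s i = T%:R.
Proof.
case: hA => _ [hp1 _].
rewrite /M -G_sum.
rewrite (@G_ext _ _ _ _ _ _ _ (fun _ _ _ => 0)); last by move=> *; rewrite big1.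
have -> : (fun j => \sum_(k < K) (j == k)%:R) = (fun _ : 'I_K => (1 : R)).
  apply/funext => j; rewrite (bigD1 j) //= eqxx big1 ?addr0 // => k kj.
  by rewrite eq_sym (negbTE kj).
by rewrite G_const // ?mulr1 ?addr0 // => j; rewrite addrC subrK.
Qed.


Definition xs i := (\sum_(s : S) M s i) / #|S|%:R.

Lemma cardS_gt0 : (0 < #|S|)%N.
Proof. by apply/card_gt0P; exists [ffun _ => true]. Qed.

Lemma avg_i i :
  #|S|%:R * expR (- (16 * xs i * Delta i ^+ 2)) / 4
  <= \sum_(s : S) V s (Eb i (s i)).
Proof.
have nS : 0 < #|S|%:R :> R by rewrite ltr0n cardS_gt0.
set F := fun s => V s (Eb i (s i)).
have eF : \sum_(s : S) F s = \sum_(s : S) V (flip i s) (Eb i (~~ s i)).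
  rewrite (reindex_inj (inv_inj (flipK i))) /=.
  by apply: eq_bigr => s _; rewrite /F flip_i.
have eM : \sum_(s : S) M (flip i s) i = \sum_(s : S) M s i.
  by rewrite [RHS](reindex_inj (inv_inj (flipK i))).
set z := fun s => - (8 * Delta i ^+ 2 * (M s i + M (flip i s) i)).
have H1 : \sum_(s : S) expR (z s) / 2 <= 2 * \sum_(s : S) F s.
  have -> : 2 * \sum_(s : S) F s = \sum_(s : S) F s + \sum_(s : S) F s by ring.
  rewrite [X in _ <= _ + X]eF -big_split /=.
  by apply: ler_sum => s _; exact: pair_s.
have H2 : expR (\sum_(s : S) #|S|%:R^-1 * z s) <= \sum_(s : S) #|S|%:R^-1 * expR (z s).
  apply: jensen_exp => [s|]; first by rewrite invr_ge0 ltW.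
  rewrite sumr_const; change (#|S|%:R^-1 *+ #|S| = 1 :> R).
  by rewrite -[_ *+ #|S|]mulr_natr mulVf // gt_eqF.
have e3 : \sum_(s : S) #|S|%:R^-1 * z s = - (16 * xs i * Delta i ^+ 2).
  rewrite -mulr_sumr /z sumrN -mulr_sumr big_split /= eM /xs.
  by field; rewrite gt_eqF.
rewrite e3 -mulr_sumr in H2.
have H3 : #|S|%:R * expR (- (16 * xs i * Delta i ^+ 2)) <= \sum_(s : S) expR (z s).
  by rewrite -ler_pdivlMl // mulrC.
have H4 : \sum_(s : S) expR (z s) / 2 = (\sum_(s : S) expR (z s)) / 2.
  by rewrite mulr_suml.
lra.
Qed.


Lemma M_ge0 s i : 0 <= M s i.
Proof.
case: hA => hp0 _.
apply: (@G_ge0 R K A hp0) => // j.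
- by case/andP: (rs01' s j).
- by case/andP: (rs01' s j) => _; rewrite subr_ge0.
Qed.

Lemma main_exists : exists (theta : R) (P : 'I_K -> probability R R),
    instance_in Delta theta P /\
    ((1/4 * scrP 16 Delta T)%:E <= regret A theta P T)%E.
Proof.
have nS : 0 < #|S|%:R :> R by rewrite ltr0n cardS_gt0.
have Hscr : scrP 16 Delta T <= \sum_i expR (- (16 * xs i * Delta i ^+ 2)).
  rewrite /scrP; apply: ge_inf.
    exists 0 => y [x _ <-]; apply: sumr_ge0 => i _; exact: ltW (expR_gt0 _).
  exists xs => //; split.
    move=> i; apply: divr_ge0; last exact: ltW.
    by apply: sumr_ge0 => s _; exact: M_ge0.
  rewrite /xs -mulr_suml exchange_big /=.
  under eq_bigr => s _ do rewrite sumM.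
  rewrite sumr_const; change (T%:R *+ #|S| / #|S|%:R = T%:R :> R).
  by rewrite -mulr_natr mulfK // gt_eqF.
have Hsum : #|S|%:R * (1/4 * scrP 16 Delta T)
    <= \sum_(s : S) \sum_i V s (Eb i (s i)).
  rewrite exchange_big /=.
  apply: le_trans (ler_sum _ (fun i _ => avg_i i)).
  rewrite -!mulr_suml -mulr_sumr.
  have : #|S|%:R * scrP 16 Delta T <= #|S|%:R * \sum_i expR (- (16 * xs i * Delta i ^+ 2)).
    by rewrite ler_pM2l.
  lra.
have [s hs] : exists s : S, 1/4 * scrP 16 Delta T <= \sum_i V s (Eb i (s i)).
  case: (pselect (exists s : S, 1/4 * scrP 16 Delta T <= \sum_i V s (Eb i (s i)))) => // hn.
  exfalso.
  have : \sum_(s : S) \sum_i V s (Eb i (s i)) < \sum_(s : S) (1/4 * scrP 16 Delta T).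
    apply: ltr_sum.
      by apply/hasP; exists [ffun _ => true]; rewrite ?mem_index_enum.
    move=> s _; rewrite ltNge; apply/negP => h; apply: hn; by exists s.
  rewrite sumr_const; change (\sum_(s : S) \sum_i V s (Eb i (s i)) < (1/4 * scrP 16 Delta T) *+ #|S| -> False).
  rewrite -mulr_natr; lra.
exists (1/2), (fun j => Bp (rs s j)); split.
  split.
  - by apply/andP; split; lra.
  - by move=> i; exact: Bp_out.
  - move=> i; rewrite mean_Bp ?rs01' // /rs.
    have [d0 _] := andP (hD i).
    case: (s i).
    + have -> : 1/2 + Delta i - 1/2 = Delta i by ring.
      by rewrite ger0_norm // ltW.
    + have -> : 1/2 - Delta i - 1/2 = - Delta i by ring.
      by rewrite normrN ger0_norm // ltW.
by rewrite reg_s lee_fin.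
Qed.

End Final.

Theorem theorem2 (R : realType) (K : nat) (Delta : 'I_K -> R)
    (hDelta : forall i, 0 < Delta i <= 1/4)
    (A : algorithm R K) (hA : valid_algorithm A)
    (T : nat) (hT : (K <= T)%N) :
  exists (theta : R) (P : 'I_K -> probability R R),
    instance_in Delta theta P /\
    ((1/4 * scrP 16 Delta T)%:E <= regret A theta P T)%E.
Proof.
exact: (@main_exists R K Delta hDelta A hA T).
Qed.
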